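(* There exists an integer $\mathsf{N}\ge 1$ such that $SAW_2(\mathsf{N})\neq SAW_3(\mathsf{N})$; that is, there is a path without crossing $c\in(\mathbb{Z}/4\mathbb{Z})^{\mathsf{N}}$ that cannot be reached from $(0,0,\dots,0)$ by a finite sequence of pivot moves all of whose intermediate conformations are paths without crossing.
   Context: A conformation of $\mathsf{N}+1$ residues is a vector $C=(C_1,\dots,C_{\mathsf{N}})\in(\mathbb{Z}/4\mathbb{Z})^{\mathsf{N}}$ (absolute encoding: $0$ = east, $1$ = south, $2$ = west, $3$ = north). Its lattice representation is $p(C)=(X_0,\dots,X_{\mathsf{N}})$ with $X_0=(0,0)$ and $X_{i}=X_{i-1}+(1,0),(0,-1),(-1,0),(0,1)$ according as $C_i=0,1,2,3$. $C$ is a path without crossing if the points $X_0,\dots,X_{\mathsf{N}}$ are pairwise distinct. $SAW_1(\mathsf{N})$ is the set of paths without crossing in $(\mathbb{Z}/4\mathbb{Z})^{\mathsf{N}}$. Let $f(x)=x+1 \pmod 4$. For $k\in\{-\mathsf{N},\dots,\mathsf{N}\}$ the pivot move $f_k$ is the identity if $k=0$, and otherwise $f_k(C_1,\dots,C_{\mathsf{N}})=(C_1,\dots,C_{|k|-1},f^{\operatorname{sign}(k)}(C_{|k|}),\dots,f^{\operatorname{sign}(k)}(C_{\mathsf{N}}))$. $SAW_2(\mathsf{N})$ is the set of $c\in SAW_1(\mathsf{N})$ for which there is a finite sequence $k_1,\dots,k_n\in\{-\mathsf{N},\dots,\mathsf{N}\}$ with $c=f_{k_n}\circ\cdots\circ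 f_{k_1}(0,\dots,0)$. $SAW_3(\mathsf{N})$ is the set of $c\in SAW_1(\mathsf{N})$ for which there is such a sequence with, in addition, every intermediate conformation $f_{k_j}\circ\cdots\circ f_{k_1}(0,\dots,0)$, $1\le j\le n$, lying in $SAW_1(\mathsf{N})$. *)

(* Defs.v *)
From HB Require Import structures.
From mathcomp Require Import all_boot all_order all_algebra.
Set Implicit Arguments. Unset Strict Implicit. Unset Printing Implicit Defensive.
Import Order.TTheory GRing.Theory Num.Theory.
Local Open Scope ring_scope.

(* A conformation of N+1 residues: a sequence of N elements of Z/4Z
   (absolute encoding 0 = east, 1 = south, 2 = west, 3 = north). *)
Definition conformation := seq 'Z_4.

Definition step (d : 'Z_4) : int * int :=
  match val d with
  | 0%N => (1, 0)
  | 1%N => (0, -1)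
  | 2%N => (-1, 0)
  | _ => (0, 1)
  end.

Definition addp (p q : int * int) : int * int := (p.1 + q.1, p.2 + q.2).

Definition point (C : conformation) (i : nat) : int * int :=
  foldr addp (0, 0) [seq step d | d <- take i C].

Definition lattice_rep (C : conformation) : seq (int * int) :=
  [seq point C i | i <- iota 0 (size C).+1].

Definition SAW1 (N : nat) (C : conformation) : Prop :=
  size C = N /\ uniq (lattice_rep C).

Definition fpow_sign (k : int) (x : 'Z_4) : 'Z_4 :=
  if 0 < k then x + 1 else x - 1.

(* Pivot move f_k: identity if k = 0; otherwise entries C_{|k|}, ..., C_N
   (1-indexed), i.e. 0-indexed positions j with |k| <= j+1, get f^{sign k}. *)
Definition pivot (k : int) (C : conformation) : conformation :=
  if k == 0 then C
  else [seq (if (j.+1 < `|k|)%N then nth 0 C j else fpow_sign k (nth 0 C j))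
       | j <- iota 0 (size C)].

Definition apply_pivots (ks : seq int) (C : conformation) : conformation :=
  foldl (fun D k => pivot k D) C ks.

Definition zero_conf (N : nat) : conformation := nseq N 0.

Definition valid_index (N : nat) (k : int) : bool := (`|k| <= N)%N.

Definition SAW2 (N : nat) (c : conformation) : Prop :=
  SAW1 N c /\
  exists ks : seq int, all (valid_index N) ks /\ c = apply_pivots ks (zero_conf N).

Definition SAW3 (N : nat) (c : conformation) : Prop :=
  SAW1 N c /\
  exists ks : seq int, all (valid_index N) ks /\ c = apply_pivots ks (zero_conf N) /\
    (forall j : nat, (1 <= j <= size ks)%N ->
       SAW1 N (apply_pivots (take j ks) (zero_conf N))).

(* Main.v *)
Require Import Defs.
From HB Require Import structures.
From mathcomp Require Import all_boot all_order all_algebra.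
Set Implicit Arguments. Unset Strict Implicit. Unset Printing Implicit Defensive.
Import Order.TTheory GRing.Theory Num.Theory.
Local Open Scope ring_scope.
Definition saw1b (N : nat) (C : conformation) : bool := (size C == N)%N && uniq (lattice_rep C).
Lemma saw1P N C : SAW1 N C <-> saw1b N C.
Proof. rewrite /SAW1 /saw1b; split=> [[/eqP -> ->]//|/andP[/eqP -> ->]//]. Qed.

Lemma size_pivot k C : size (pivot k C) = size C.
Proof. by rewrite /pivot; case: ifP => // _; rewrite size_map size_iota. Qed.

Lemma fpow_inv (k : int) (x : 'Z_4) : k != 0 -> fpow_sign (- k) (fpow_sign k x) = x.
Proof.
move=> k0; rewrite /fpow_sign oppr_gt0.
case: (ltrgtP k 0) => hk.
- by rewrite subrK.
- by rewrite addrK.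
- by rewrite hk eqxx in k0.
Qed.

Lemma pivot_inv k C : k != 0 -> pivot (- k) (pivot k C) = C.
Proof.
move=> k0; have k0' : (- k == 0) = false by rewrite oppr_eq0 (negbTE k0).
apply: (@eq_from_nth _ 0); first by rewrite !size_pivot.
move=> j; rewrite !size_pivot => hj.
rewrite /pivot k0' (negbTE k0) size_map size_iota.
rewrite (nth_map 0%N); last by rewrite size_iota.
rewrite nth_iota // add0n abszN.
rewrite (nth_map 0%N); last by rewrite size_iota.
rewrite nth_iota // add0n.
by have [h|h] := boolP (j.+1 < `|k|)%N; rewrite ?h ?(negbTE h) // fpow_inv.
Qed.

Lemma apply_pivots_rcons ks k C : apply_pivots (rcons ks k) C = pivot k (apply_pivots ks C).
Proof. by rewrite /apply_pivots foldl_rcons. Qed.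

Lemma pivot0 C : pivot 0 C = C.
Proof. by rewrite /pivot eqxx. Qed.

Lemma absz1 (k : int) : `|k|%N = 1%N -> k = 1 \/ k = -1.
Proof. by case: k => [[|[|n]]|[|n]] //= _; [left|right]. Qed.

Lemma not_saw3_gen N (S : seq conformation) c :
  c \in S ->
  zero_conf N \notin S ->
  SAW1 N (zero_conf N) ->
  (forall s, s \in S -> forall k, valid_index N k -> (2 <= `|k|)%N -> ~~ saw1b N (pivot k s)) ->
  (forall s, s \in S -> (pivot 1 s \in S) && (pivot (-1) s \in S)) ->
  ~ SAW3 N c.
Proof.
move=> cS z0 zsaw frz rotS [_ [ks [vks [eqc inter]]]].
have key : forall j, (j <= size ks)%N -> apply_pivots (take j ks) (zero_conf N) \notin S.
  elim=> [|j IH] hj; first by rewrite take0.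
  have hj' : (j < size ks)%N := hj.
  rewrite (take_nth 0 hj') apply_pivots_rcons.
  set D := apply_pivots (take j ks) _; set k := nth 0 ks j.
  apply/negP => ES.
  have DS : D \notin S := IH (ltnW hj').
  have Dsaw : SAW1 N D.
    case: (posnP j) => [j0|jpos]; first by rewrite /D j0 take0.
    by apply: inter; rewrite jpos ltnW.
  have vk : valid_index N k by apply: (all_nthP 0 vks).
  have [k0|k0] := eqVneq k 0.
    by move: ES; rewrite k0 pivot0 (negbTE DS).
  have Dinv : pivot (- k) (pivot k D) = D by rewrite pivot_inv.
  case: (ltnP 1 `|k|) => hk.
    have := frz _ ES (- k); rewrite /valid_index abszN; move/(_ vk hk).
    by rewrite Dinv; move/saw1P: Dsaw => ->.
  have k1 : `|k|%N = 1%N.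
    apply/eqP; rewrite eqn_leq hk /= lt0n absz_eq0; exact: k0.
  move/andP: (rotS _ ES) => [h1 h2].
  case: (absz1 k1) => kk; rewrite kk ?opprK in Dinv h1 h2.
    by rewrite -Dinv h2 in DS.
  by rewrite -Dinv h1 in DS.
have := key _ (leqnn (size ks)); rewrite take_size -eqc.
by rewrite cS.
Qed.

From mathcomp Require Import zify.

Definition krange (N : nat) : seq int :=
  [seq Posz i | i <- iota 2 N.-1] ++ [seq Negz i | i <- iota 1 N.-1].

Lemma in_krange N k : valid_index N k -> (2 <= `|k|)%N -> k \in krange N.
Proof.
rewrite /valid_index /krange mem_cat; case: k => n /= h1 h2.
  apply/orP; left; apply: map_f; rewrite mem_iota; lia.
apply/orP; right; apply: map_f; rewrite mem_iota; lia.
Qed.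

Lemma frozen_of_check N S :
  all (fun s => all (fun k => ~~ saw1b N (pivot k s)) (krange N)) S ->
  forall s, s \in S -> forall k, valid_index N k -> (2 <= `|k|)%N -> ~~ saw1b N (pivot k s).
Proof.
move=> /allP H s sS k vk hk; have /allP := H s sS; apply; exact: in_krange.
Qed.

Lemma nth_lattice_rep C i : (i <= size C)%N -> nth (0, 0) (lattice_rep C) i = point C i.
Proof.
move=> hi; rewrite /lattice_rep (nth_map 0%N); last by rewrite size_iota.
by rewrite nth_iota.
Qed.

Definition collide (C : conformation) (ij : nat * nat) : bool :=
  [&& (ij.1 < ij.2)%N, (ij.2 <= size C)%N & point C ij.1 == point C ij.2].

Lemma collide_notsaw N C ij : collide C ij -> ~~ saw1b N C.
Proof.
case: ij => i j /and3P [/= hij hj /eqP e].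
rewrite /saw1b negb_and; apply/orP; right; apply/negP => U.
have hsz : size (lattice_rep C) = (size C).+1 by rewrite /lattice_rep size_map size_iota.
have := nth_uniq (0, 0) _ _ U.
have hi' : (i < size (lattice_rep C))%N by rewrite hsz ltnS (ltnW (leq_trans hij hj)).
have hj' : (j < size (lattice_rep C))%N by rewrite hsz ltnS.
move/(_ i j hi' hj'); rewrite !nth_lattice_rep ?e ?eqxx ?(ltnW (leq_trans hij hj)) //.
move=> h.
by move/esym/eqP: h => h; rewrite h ltnn in hij.
Qed.

Lemma all2_mem (A : eqType) (B : Type) (r : A -> B -> bool) (s : seq A) (t : seq B) (x : A) :
  all2 r s t -> x \in s -> exists y, r x y.
Proof.
elim: s t => [|a s IH] [|b t] //= /andP [h1 h2]; rewrite inE => /orP [/eqP ->|xs].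
  by exists b.
exact: IH h2 xs.
Qed.

Lemma frozen_of_cert N (S : seq conformation) (certs : seq (seq (nat * nat))) :
  all2 (fun s cs => all2 (fun k ij => collide (pivot k s) ij) (krange N) cs) S certs ->
  forall s, s \in S -> forall k, valid_index N k -> (2 <= `|k|)%N -> ~~ saw1b N (pivot k s).
Proof.
move=> H s sS k vk hk.
have [cs hcs] := all2_mem H sS.
have [ij hij] := all2_mem hcs (in_krange vk hk).
exact: collide_notsaw hij.
Qed.
Definition NN : nat := 215.
Definition wit_nat : seq nat := [:: 2; 3; 3; 3; 3; 2; 3; 2; 3; 2; 3; 3; 2; 1; 2; 2; 3; 0; 3; 3; 2; 2; 2; 1; 0; 1; 2; 2; 3; 3; 2; 1; 1; 2; 2; 1; 1; 2; 1; 1; 1; 0; 1; 1; 0; 1; 1; 0; 1; 0; 1; 0; 0; 1; 0; 1; 0; 0; 0; 0; 1; 0; 1; 0; 1; 0; 1; 1; 2; 2; 2; 3; 2; 2; 2; 2; 3; 2; 2; 3; 0; 3; 2; 2; 3; 0; 3; 2; 2; 3; 2; 3; 2; 2; 2; 3; 0; 0; 3; 2; 3; 2; 3; 3; 3; 3; 3; 3; 3; 0; 3; 0; 3; 0; 3; 0; 0; 0; 0; 0; 0; 0; 1; 0; 1; 0; 0; 1; 2; 1; 0; 1; 0; 1; 0; 1; 0; 1; 2; 1; 0; 0; 1; 0; 0; 1; 2; 1; 0; 0; 1; 1; 2; 1; 2; 2; 3; 3; 2; 2; 3; 2; 2; 3; 2; 3; 2; 3; 0; 0; 3; 2; 2;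 2; 2; 1; 1; 1; 1; 1; 1; 2; 3; 3; 2; 2; 3; 0; 3; 3; 2; 1; 2; 3; 2; 2; 3; 3; 2; 3; 0; 3; 3; 0; 1; 0; 1; 0; 0; 0; 0; 0; 0; 1; 2].
Definition ks_wit : seq int := [:: Posz 1; Posz 1; Posz 2; Posz 6; Posz 6; Posz 6; Posz 7; Posz 8; Posz 8; Posz 8; Posz 9; Posz 10; Posz 10; Posz 10; Posz 11; Posz 13; Posz 13; Posz 13; Posz 14; Posz 14; Posz 14; Posz 15; Posz 17; Posz 18; Posz 19; Posz 19; Posz 19; Posz 21; Posz 21; Posz 21; Posz 24; Posz 24; Posz 24; Posz 25; Posz 25; Posz 25; Posz 26; Posz 27; Posz 29; Posz 31; Posz 31; Posz 31; Posz 32; Posz 32; Posz 32; Posz 34; Posz 36; Posz 36; Posz 36; Posz 38; Posz 39; Posz 39; Posz 39; Posz 42; Posz 42; Posz 42; Posz 43; Posz 45; Posz 45; Posz 45; Posz 46; Posz 48; Posz 48; Posz 48; Posz 49; Posz 50; Posz 50; Posz 50; Posz 51; Posz 52; Posz 52; Posz 52; Posz 54; Posz 55; Posz 55; Posz 55; Posz 56; Posz 57; Posz 57; Posz 57; Posz 61; Posz 62; Posz 62; Posz 62; Posz 63; Posz 64; Posz 64; Posz 64; Posz 65; Posz 66; Posz 66; Posz 66; Posz 67; Posz 69; Posz 72; Posz 73; Posz 73; Posz 73; Posz 77; Posz 78; Posz 78; Posz 78; Posz 80; Posz 81; Posz 82; Posz 82; Posz 82; Posz 83; Posz 83; Posz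 83; Posz 85; Posz 86; Posz 87; Posz 87; Posz 87; Posz 88; Posz 88; Posz 88; Posz 90; Posz 91; Posz 91; Posz 91; Posz 92; Posz 93; Posz 93; Posz 93; Posz 96; Posz 97; Posz 99; Posz 99; Posz 99; Posz 100; Posz 100; Posz 100; Posz 101; Posz 102; Posz 102; Posz 102; Posz 103; Posz 110; Posz 111; Posz 111; Posz 111; Posz 112; Posz 113; Posz 113; Posz 113; Posz 114; Posz 115; Posz 115; Posz 115; Posz 116; Posz 123; Posz 124; Posz 124; Posz 124; Posz 125; Posz 126; Posz 126; Posz 126; Posz 128; Posz 129; Posz 130; Posz 130; Posz 130; Posz 131; Posz 131; Posz 131; Posz 132; Posz 133; Posz 133; Posz 133; Posz 134; Posz 135; Posz 135; Posz 135; Posz 136; Posz 137; Posz 137; Posz 137; Posz 138; Posz 139; Posz 140; Posz 140; Posz 140; Posz 141; Posz 141; Posz 141; Posz 143; Posz 144; Posz 144; Posz 144; Posz 146; Posz 147; Posz 148; Posz 148; Posz 148; Posz 149; Posz 149; Posz 149; Posz 151; Posz 153; Posz 154; Posz 154; Posz 154; Posz 155; Posz 157; Posz 159; Posz 159; Posz 159; Posz 161; Posz 162; Posz 162; Posz 162; Posz 164; Posz 165; Posz 165; Posz 165; Posz 166; Posz 167; Posz 167; Posz 167; Posz 168; Posz 169; Posz 171; Posz 171; Posz 171; Posz 172; Posz 172; Posz 172; Posz 176; Posz 176; Posz 176; Posz 182; Posz 183; Posz 185; Posz 185; Posz 185; Posz 187; Posz 188; Posz 189; Posz 189; Posz 189;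 Posz 191; Posz 191; Posz 191; Posz 192; Posz 192; Posz 192; Posz 193; Posz 194; Posz 195; Posz 195; Posz 195; Posz 197; Posz 199; Posz 199; Posz 199; Posz 200; Posz 201; Posz 202; Posz 202; Posz 202; Posz 204; Posz 205; Posz 206; Posz 206; Posz 206; Posz 207; Posz 208; Posz 208; Posz 208; Posz 214; Posz 215].
Definition certs : seq (seq (nat * nat)) := [:: [:: (0,2); (0,140); (0,138); (2,138); (4,136); (5,7); (5,133); (7,9); (7,131); (9,11); (7,127); (9,127); (11,125); (13,15); (13,17); (15,17); (16,18); (13,19); (12,122); (19,123); (20,120); (21,119); (22,118); (23,29); (24,26); (25,27); (24,28); (27,29); (24,30); (23,117); (30,116); (30,114); (32,34); (31,111); (34,112); (34,110); (36,38); (36,108); (38,106); (39,105); (40,104); (41,43); (41,101); (43,101); (44,46); (41,95); (44,94); (47,49); (47,91); (49,51); (49,89); (49,85); (52,54); (51,83); (54,56); (51,79); (52,78); (52,76); (54,74); (59,61); (57,73); (61,63); (59,73); (63,65); (61,71); (65,67); (65,69); (67,69); (65,71); (65,73); (70,72); (61,75); (61,77); (59,79); (61,83); (75,77); (58,84); (77,81); (78,80); (79,81); (56,84); (54,84); (82,86); (83,85); (84,86); (54,88); (52,88); (51,89); (88,90); (49,91); (90,92); (47,93); (46,96); (93,97); (94,96); (95,97); (94,98); (47,99); (44,100); (99,101); (43,103); (101,103); (43,105); (41,105); (40,106); (39,107); (38,108); (38,110); (108,110); (35,111); (110,112); (34,114); (112,114); (31,115); (114,116); (31,117); (30,118); (23,119);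 (22,120); (21,121); (20,122); (121,123); (19,125); (123,125); (12,126); (12,128); (126,128); (127,129); (12,130); (9,131); (130,132); (7,133); (132,134); (5,135); (134,136); (4,138); (136,138); (137,139); (4,140); (0,142); (0,144); (141,143); (0,148); (143,147); (144,146); (145,147); (1,155); (0,156); (143,157); (149,151); (149,153); (151,153); (148,156); (153,155); (153,157); (155,157); (148,160); (147,161); (143,163); (159,161); (0,162); (1,163); (162,164); (2,166); (164,166); (164,170); (166,168); (167,169); (166,170); (3,171); (6,172); (8,174); (26,186); (15,191); (16,194); (15,195); (175,189); (175,187); (178,184); (179,183); (180,182); (181,183); (180,184); (177,187); (184,188); (185,187); (186,188); (178,190); (10,200); (15,199); (174,206); (191,193); (192,194); (174,204); (175,203); (195,197); (190,204); (194,206); (198,200); (199,201); (197,207); (201,205); (202,204); (203,205); (201,207); (205,207); (194,210); (191,211); (190,212); (190,214); (175,213); (211,215); (212,214); (213,215); (0,162); (0,164); (0,166); (0,168); (4,6); (5,171); (6,8); (5,173); (8,10); (5,175); (10,14); (11,13); (12,14); (0,196); (1,43); (2,44); (16,26); (17,19); (17,21); (19,21); (17,23); (21,25); (22,24); (23,25); (17,27); (4,44); (6,44); (8,44); (28,32); (29,31); (30,32); (29,33); (10,44); (16,42); (34,36); (16,44); (16,46); (37,39); (26,48); (26,50); (40,42); (16,52); (16,54); (43,45); (15,57); (16,58); (46,48); (16,60); (48,50); (14,64); (50,52); (10,66); (8,66); (53,55); (4,68); (55,57); (2,68); (1,67); (46,138); (47,137); (60,62); (51,141); (62,64); (52,144);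 (64,66); (54,146); (54,150); (56,152); (54,152); (51,151); (49,151); (71,73); (47,149); (44,150); (43,151); (41,151); (76,78); (39,151); (38,152); (36,152); (80,82); (81,83); (80,84); (35,153); (32,154); (85,87); (86,88); (85,89); (31,155); (89,91); (41,179); (91,93); (39,179); (38,180); (38,182); (35,181); (96,100); (97,99); (98,100); (96,102); (100,102); (31,181); (30,182); (31,185); (30,186); (31,193); (31,195); (30,196); (31,199); (109,111); (23,199); (111,113); (21,199); (113,115); (20,200); (20,202); (12,200); (12,202); (11,203); (9,203); (7,203); (5,203); (122,124); (3,203); (124,126); (0,202); (0,204); (0,206); (128,130); (129,131); (0,208); (131,133); (0,210); (133,135); (66,200); (135,137); (68,200); (68,198); (138,140); (139,141); (138,142); (70,206); (142,144); (69,209); (68,210); (69,211); (146,148); (147,149); (146,150); (69,213); (67,171); (68,170); (152,154); (68,164); (66,162); (64,162); (64,164); (157,159); (62,166); (60,166); (160,162); (58,174); (57,175); (163,165); (62,186); (165,167); (163,179); (165,177); (168,172); (169,171); (170,172); (169,173); (168,174); (168,176); (174,176); (168,178); (167,179); (165,181); (55,187); (55,185); (55,183); (53,183); (53,185); (183,185); (48,190); (46,190); (48,194); (187,189); (187,191); (189,191); (190,192); (187,193); (48,196); (193,195); (45,197); (43,197); (42,198); (197,199); (40,200); (37,201); (200,202); (37,203); (34,204); (28,206); (204,206); (27,209); (206,208); (27,211); (26,212); (16,212); (15,213); (10,214); (8,214); (173,215)];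
 [:: (0,2); (0,140); (0,138); (2,138); (4,136); (5,7); (5,133); (7,9); (7,131); (9,11); (7,127); (9,127); (11,125); (13,15); (13,17); (15,17); (16,18); (13,19); (12,122); (19,123); (20,120); (21,119); (22,118); (23,29); (24,26); (25,27); (24,28); (27,29); (24,30); (23,117); (30,116); (30,114); (32,34); (31,111); (34,112); (34,110); (36,38); (36,108); (38,106); (39,105); (40,104); (41,43); (41,101); (43,101); (44,46); (41,95); (44,94); (47,49); (47,91); (49,51); (49,89); (49,85); (52,54); (51,83); (54,56); (51,79); (52,78); (52,76); (54,74); (59,61); (57,73); (61,63); (59,73); (63,65); (61,71); (65,67); (65,69); (67,69); (65,71); (65,73); (70,72); (61,75); (61,77); (59,79); (61,83); (75,77); (58,84); (77,81); (78,80); (79,81); (56,84); (54,84); (82,86); (83,85); (84,86); (54,88); (52,88); (51,89); (88,90); (49,91); (90,92); (47,93); (46,96); (93,97); (94,96); (95,97); (94,98); (47,99); (44,100); (99,101); (43,103); (101,103); (43,105); (41,105); (40,106); (39,107); (38,108); (38,110); (108,110); (35,111); (110,112); (34,114); (112,114); (31,115); (114,116); (31,117); (30,118); (23,119); (22,120); (21,121); (20,122); (121,123); (19,125); (123,125); (12,126); (12,128); (126,128); (127,129); (12,130); (9,131); (130,132); (7,133); (132,134); (5,135); (134,136); (4,138); (136,138); (137,139); (4,140); (0,142); (0,144); (141,143); (0,148); (143,147); (144,146); (145,147); (1,155); (0,156); (143,157); (149,151); (149,153); (151,153); (148,156); (153,155); (153,157); (155,157); (148,160); (147,161); (143,163);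 (159,161); (0,162); (1,163); (162,164); (2,166); (164,166); (164,170); (166,168); (167,169); (166,170); (3,171); (6,172); (8,174); (26,186); (15,191); (16,194); (15,195); (175,189); (175,187); (178,184); (179,183); (180,182); (181,183); (180,184); (177,187); (184,188); (185,187); (186,188); (178,190); (10,200); (15,199); (174,206); (191,193); (192,194); (174,204); (175,203); (195,197); (190,204); (194,206); (198,200); (199,201); (197,207); (201,205); (202,204); (203,205); (201,207); (205,207); (194,210); (191,211); (190,212); (190,214); (175,213); (211,215); (212,214); (213,215); (0,162); (0,164); (0,166); (0,168); (4,6); (5,171); (6,8); (5,173); (8,10); (5,175); (10,14); (11,13); (12,14); (0,196); (1,43); (2,44); (16,26); (17,19); (17,21); (19,21); (17,23); (21,25); (22,24); (23,25); (17,27); (4,44); (6,44); (8,44); (28,32); (29,31); (30,32); (29,33); (10,44); (16,42); (34,36); (16,44); (16,46); (37,39); (26,48); (26,50); (40,42); (16,52); (16,54); (43,45); (15,57); (16,58); (46,48); (16,60); (48,50); (14,64); (50,52); (10,66); (8,66); (53,55); (4,68); (55,57); (2,68); (1,67); (46,138); (47,137); (60,62); (51,141); (62,64); (52,144); (64,66); (54,146); (54,150); (56,152); (54,152); (51,151); (49,151); (71,73); (47,149); (44,150); (43,151); (41,151); (76,78); (39,151); (38,152); (36,152); (80,82); (81,83); (80,84); (35,153); (32,154); (85,87); (86,88); (85,89); (31,155); (89,91); (41,179); (91,93); (39,179); (38,180); (38,182); (35,181); (96,100); (97,99); (98,100); (96,102); (100,102); (31,181); (30,182); (31,185); (30,186);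 (31,193); (31,195); (30,196); (31,199); (109,111); (23,199); (111,113); (21,199); (113,115); (20,200); (20,202); (12,200); (12,202); (11,203); (9,203); (7,203); (5,203); (122,124); (3,203); (124,126); (0,202); (0,204); (0,206); (128,130); (129,131); (0,208); (131,133); (0,210); (133,135); (66,200); (135,137); (68,200); (68,198); (138,140); (139,141); (138,142); (70,206); (142,144); (69,209); (68,210); (69,211); (146,148); (147,149); (146,150); (69,213); (67,171); (68,170); (152,154); (68,164); (66,162); (64,162); (64,164); (157,159); (62,166); (60,166); (160,162); (58,174); (57,175); (163,165); (62,186); (165,167); (163,179); (165,177); (168,172); (169,171); (170,172); (169,173); (168,174); (168,176); (174,176); (168,178); (167,179); (165,181); (55,187); (55,185); (55,183); (53,183); (53,185); (183,185); (48,190); (46,190); (48,194); (187,189); (187,191); (189,191); (190,192); (187,193); (48,196); (193,195); (45,197); (43,197); (42,198); (197,199); (40,200); (37,201); (200,202); (37,203); (34,204); (28,206); (204,206); (27,209); (206,208); (27,211); (26,212); (16,212); (15,213); (10,214); (8,214); (173,215)];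
 [:: (0,2); (0,140); (0,138); (2,138); (4,136); (5,7); (5,133); (7,9); (7,131); (9,11); (7,127); (9,127); (11,125); (13,15); (13,17); (15,17); (16,18); (13,19); (12,122); (19,123); (20,120); (21,119); (22,118); (23,29); (24,26); (25,27); (24,28); (27,29); (24,30); (23,117); (30,116); (30,114); (32,34); (31,111); (34,112); (34,110); (36,38); (36,108); (38,106); (39,105); (40,104); (41,43); (41,101); (43,101); (44,46); (41,95); (44,94); (47,49); (47,91); (49,51); (49,89); (49,85); (52,54); (51,83); (54,56); (51,79); (52,78); (52,76); (54,74); (59,61); (57,73); (61,63); (59,73); (63,65); (61,71); (65,67); (65,69); (67,69); (65,71); (65,73); (70,72); (61,75); (61,77); (59,79); (61,83); (75,77); (58,84); (77,81); (78,80); (79,81); (56,84); (54,84); (82,86); (83,85); (84,86); (54,88); (52,88); (51,89); (88,90); (49,91); (90,92); (47,93); (46,96); (93,97); (94,96); (95,97); (94,98); (47,99); (44,100); (99,101); (43,103); (101,103); (43,105); (41,105); (40,106); (39,107); (38,108); (38,110); (108,110); (35,111); (110,112); (34,114); (112,114); (31,115); (114,116); (31,117); (30,118); (23,119); (22,120); (21,121); (20,122); (121,123); (19,125); (123,125); (12,126); (12,128); (126,128); (127,129); (12,130); (9,131); (130,132); (7,133); (132,134); (5,135); (134,136); (4,138); (136,138); (137,139); (4,140); (0,142); (0,144); (141,143); (0,148); (143,147); (144,146); (145,147); (1,155); (0,156); (143,157); (149,151); (149,153); (151,153); (148,156); (153,155); (153,157); (155,157); (148,160); (147,161); (143,163);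 (159,161); (0,162); (1,163); (162,164); (2,166); (164,166); (164,170); (166,168); (167,169); (166,170); (3,171); (6,172); (8,174); (26,186); (15,191); (16,194); (15,195); (175,189); (175,187); (178,184); (179,183); (180,182); (181,183); (180,184); (177,187); (184,188); (185,187); (186,188); (178,190); (10,200); (15,199); (174,206); (191,193); (192,194); (174,204); (175,203); (195,197); (190,204); (194,206); (198,200); (199,201); (197,207); (201,205); (202,204); (203,205); (201,207); (205,207); (194,210); (191,211); (190,212); (190,214); (175,213); (211,215); (212,214); (213,215); (0,162); (0,164); (0,166); (0,168); (4,6); (5,171); (6,8); (5,173); (8,10); (5,175); (10,14); (11,13); (12,14); (0,196); (1,43); (2,44); (16,26); (17,19); (17,21); (19,21); (17,23); (21,25); (22,24); (23,25); (17,27); (4,44); (6,44); (8,44); (28,32); (29,31); (30,32); (29,33); (10,44); (16,42); (34,36); (16,44); (16,46); (37,39); (26,48); (26,50); (40,42); (16,52); (16,54); (43,45); (15,57); (16,58); (46,48); (16,60); (48,50); (14,64); (50,52); (10,66); (8,66); (53,55); (4,68); (55,57); (2,68); (1,67); (46,138); (47,137); (60,62); (51,141); (62,64); (52,144); (64,66); (54,146); (54,150); (56,152); (54,152); (51,151); (49,151); (71,73); (47,149); (44,150); (43,151); (41,151); (76,78); (39,151); (38,152); (36,152); (80,82); (81,83); (80,84); (35,153); (32,154); (85,87); (86,88); (85,89); (31,155); (89,91); (41,179); (91,93); (39,179); (38,180); (38,182); (35,181); (96,100); (97,99); (98,100); (96,102); (100,102); (31,181); (30,182); (31,185); (30,186);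 (31,193); (31,195); (30,196); (31,199); (109,111); (23,199); (111,113); (21,199); (113,115); (20,200); (20,202); (12,200); (12,202); (11,203); (9,203); (7,203); (5,203); (122,124); (3,203); (124,126); (0,202); (0,204); (0,206); (128,130); (129,131); (0,208); (131,133); (0,210); (133,135); (66,200); (135,137); (68,200); (68,198); (138,140); (139,141); (138,142); (70,206); (142,144); (69,209); (68,210); (69,211); (146,148); (147,149); (146,150); (69,213); (67,171); (68,170); (152,154); (68,164); (66,162); (64,162); (64,164); (157,159); (62,166); (60,166); (160,162); (58,174); (57,175); (163,165); (62,186); (165,167); (163,179); (165,177); (168,172); (169,171); (170,172); (169,173); (168,174); (168,176); (174,176); (168,178); (167,179); (165,181); (55,187); (55,185); (55,183); (53,183); (53,185); (183,185); (48,190); (46,190); (48,194); (187,189); (187,191); (189,191); (190,192); (187,193); (48,196); (193,195); (45,197); (43,197); (42,198); (197,199); (40,200); (37,201); (200,202); (37,203); (34,204); (28,206); (204,206); (27,209); (206,208); (27,211); (26,212); (16,212); (15,213); (10,214); (8,214); (173,215)];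
 [:: (0,2); (0,140); (0,138); (2,138); (4,136); (5,7); (5,133); (7,9); (7,131); (9,11); (7,127); (9,127); (11,125); (13,15); (13,17); (15,17); (16,18); (13,19); (12,122); (19,123); (20,120); (21,119); (22,118); (23,29); (24,26); (25,27); (24,28); (27,29); (24,30); (23,117); (30,116); (30,114); (32,34); (31,111); (34,112); (34,110); (36,38); (36,108); (38,106); (39,105); (40,104); (41,43); (41,101); (43,101); (44,46); (41,95); (44,94); (47,49); (47,91); (49,51); (49,89); (49,85); (52,54); (51,83); (54,56); (51,79); (52,78); (52,76); (54,74); (59,61); (57,73); (61,63); (59,73); (63,65); (61,71); (65,67); (65,69); (67,69); (65,71); (65,73); (70,72); (61,75); (61,77); (59,79); (61,83); (75,77); (58,84); (77,81); (78,80); (79,81); (56,84); (54,84); (82,86); (83,85); (84,86); (54,88); (52,88); (51,89); (88,90); (49,91); (90,92); (47,93); (46,96); (93,97); (94,96); (95,97); (94,98); (47,99); (44,100); (99,101); (43,103); (101,103); (43,105); (41,105); (40,106); (39,107); (38,108); (38,110); (108,110); (35,111); (110,112); (34,114); (112,114); (31,115); (114,116); (31,117); (30,118); (23,119); (22,120); (21,121); (20,122); (121,123); (19,125); (123,125); (12,126); (12,128); (126,128); (127,129); (12,130); (9,131); (130,132); (7,133); (132,134); (5,135); (134,136); (4,138); (136,138); (137,139); (4,140); (0,142); (0,144); (141,143); (0,148); (143,147); (144,146); (145,147); (1,155); (0,156); (143,157); (149,151); (149,153); (151,153); (148,156); (153,155); (153,157); (155,157); (148,160); (147,161); (143,163);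 (159,161); (0,162); (1,163); (162,164); (2,166); (164,166); (164,170); (166,168); (167,169); (166,170); (3,171); (6,172); (8,174); (26,186); (15,191); (16,194); (15,195); (175,189); (175,187); (178,184); (179,183); (180,182); (181,183); (180,184); (177,187); (184,188); (185,187); (186,188); (178,190); (10,200); (15,199); (174,206); (191,193); (192,194); (174,204); (175,203); (195,197); (190,204); (194,206); (198,200); (199,201); (197,207); (201,205); (202,204); (203,205); (201,207); (205,207); (194,210); (191,211); (190,212); (190,214); (175,213); (211,215); (212,214); (213,215); (0,162); (0,164); (0,166); (0,168); (4,6); (5,171); (6,8); (5,173); (8,10); (5,175); (10,14); (11,13); (12,14); (0,196); (1,43); (2,44); (16,26); (17,19); (17,21); (19,21); (17,23); (21,25); (22,24); (23,25); (17,27); (4,44); (6,44); (8,44); (28,32); (29,31); (30,32); (29,33); (10,44); (16,42); (34,36); (16,44); (16,46); (37,39); (26,48); (26,50); (40,42); (16,52); (16,54); (43,45); (15,57); (16,58); (46,48); (16,60); (48,50); (14,64); (50,52); (10,66); (8,66); (53,55); (4,68); (55,57); (2,68); (1,67); (46,138); (47,137); (60,62); (51,141); (62,64); (52,144); (64,66); (54,146); (54,150); (56,152); (54,152); (51,151); (49,151); (71,73); (47,149); (44,150); (43,151); (41,151); (76,78); (39,151); (38,152); (36,152); (80,82); (81,83); (80,84); (35,153); (32,154); (85,87); (86,88); (85,89); (31,155); (89,91); (41,179); (91,93); (39,179); (38,180); (38,182); (35,181); (96,100); (97,99); (98,100); (96,102); (100,102); (31,181); (30,182); (31,185); (30,186);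 (31,193); (31,195); (30,196); (31,199); (109,111); (23,199); (111,113); (21,199); (113,115); (20,200); (20,202); (12,200); (12,202); (11,203); (9,203); (7,203); (5,203); (122,124); (3,203); (124,126); (0,202); (0,204); (0,206); (128,130); (129,131); (0,208); (131,133); (0,210); (133,135); (66,200); (135,137); (68,200); (68,198); (138,140); (139,141); (138,142); (70,206); (142,144); (69,209); (68,210); (69,211); (146,148); (147,149); (146,150); (69,213); (67,171); (68,170); (152,154); (68,164); (66,162); (64,162); (64,164); (157,159); (62,166); (60,166); (160,162); (58,174); (57,175); (163,165); (62,186); (165,167); (163,179); (165,177); (168,172); (169,171); (170,172); (169,173); (168,174); (168,176); (174,176); (168,178); (167,179); (165,181); (55,187); (55,185); (55,183); (53,183); (53,185); (183,185); (48,190); (46,190); (48,194); (187,189); (187,191); (189,191); (190,192); (187,193); (48,196); (193,195); (45,197); (43,197); (42,198); (197,199); (40,200); (37,201); (200,202); (37,203); (34,204); (28,206); (204,206); (27,209); (206,208); (27,211); (26,212); (16,212); (15,213); (10,214); (8,214); (173,215)]].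

Definition z4 (n : nat) : 'Z_4 := inZp n.
Definition wit : conformation := map z4 wit_nat.
Definition Sset : seq conformation :=
  [:: wit; pivot 1 wit; pivot 1 (pivot 1 wit); pivot 1 (pivot 1 (pivot 1 wit))].

Lemma chk_frozen :
  all2 (fun s cs => all2 (fun k ij => collide (pivot k s) ij) (krange NN) cs) Sset certs.
Proof. vm_compute. reflexivity. Qed.

Lemma chk_rot : all (fun s => (pivot 1 s \in Sset) && (pivot (-1) s \in Sset)) Sset.
Proof. vm_compute. reflexivity. Qed.

Lemma chk_zero : (zero_conf NN \notin Sset) && saw1b NN (zero_conf NN).
Proof. vm_compute. reflexivity. Qed.

Lemma chk_wit : saw1b NN wit && all (valid_index NN) ks_wit && (wit == apply_pivots ks_wit (zero_conf NN)).
Proof. vm_compute. reflexivity. Qed.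

Lemma wit_in : wit \in Sset.
Proof. by rewrite inE eqxx. Qed.

Theorem mainTheorem2 :
  exists N : nat, (1 <= N)%N /\ exists c : conformation, SAW2 N c /\ ~ SAW3 N c.
Proof.
exists NN; split; first by [].
exists wit; split.
  case/andP: chk_wit => /andP [h1 h2] /eqP h3.
  split; first exact/saw1P.
  exists ks_wit; split; [exact: h2 | exact: h3].
case/andP: chk_zero => z1 z2.
have fr := frozen_of_cert chk_frozen.
have rt : forall s, s \in Sset -> (pivot 1 s \in Sset) && (pivot (-1) s \in Sset).
  by apply/allP: chk_rot.
exact: (not_saw3_gen wit_in z1 (proj2 (saw1P _ _) z2) fr rt).
Qed.
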